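(* If $\rho\equiv\sum_{n=1}^N \frac{r_n}{C_n}\le 1$, then every packet $p^{g,j}$ of the aggregate flow has delay $d^{g,j}-a^{g,j}\le \sum_{n=1}^N\frac{\sigma_n}{C_n}$. Moreover, the bound is tight: there exist arrival patterns satisfying the constraints (e.g. each class $m$ releasing a burst of total size $\sigma_m$ at time $0$) for which some packet has delay exactly $\sum_n \sigma_n/C_n$.
   Context: A multiclass FIFO system serves packets from $N$ classes. Class $n$ has constant service rate $C_n>0$. All packets, indexed in order of arrival (ties broken arbitrarily) as $p^{g,1},p^{g,2},\dots$ with arrival times $0\le a^{g,1}\le a^{g,2}\le\cdots$ and lengths $l^{g,j}>0$, depart at $d^{g,j}=\max\{a^{g,j},d^{g,j-1}\}+l^{g,j}/C_{c(j)}$, $d^{g,0}=0$, where $c(j)$ is the class of $p^{g,j}$ (work-conserving FIFO, initially empty, infinite buffer). $A_n(s,t)$ is the total length of class-$n$ packets arriving in $[s,t]$. Each class satisfies the leaky-bucket constraint $A_n(s,t)\le r_n(t-s)+\sigma_n$ for all $0\le s\le t$, with constants $r_n,\sigma_n\ge 0$. *)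

(* Defs.v *)
From Stdlib Require Import Reals Lra Lia.
Open Scope R_scope.

Fixpoint sumR (n : nat) (f : nat -> R) : R :=
  match n with
  | O => 0
  | S k => sumR k f + f k
  end.

(* Packets are indexed j = 1, 2, ...; classes are 0, ..., N-1.
   cls j = class of packet j, a j = arrival time, l j = length,
   C n = service rate of class n.
   dep j = departure time d^{g,j}, with d^{g,0} = 0. *)
Fixpoint dep (C : nat -> R) (cls : nat -> nat) (a l : nat -> R) (j : nat) : R :=
  match j with
  | O => 0
  | S k => Rmax (a (S k)) (dep C cls a l k) + l (S k) / C (cls (S k))
  end.

(* A_n(s,t) for a trace of K packets (indices 1..K): total length of
   class-n packets arriving in [s,t]. *)
Definition Arr (K : nat) (cls : nat -> nat) (a l : nat -> R) (n : nat) (s t : R) : R :=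
  sumR K (fun i =>
    if Nat.eqb (cls (S i)) n then
      if Rle_dec s (a (S i)) then
        if Rle_dec (a (S i)) t then l (S i) else 0
      else 0
    else 0).

Definition valid_trace (N : nat) (r sigma : nat -> R)
    (K : nat) (cls : nat -> nat) (a l : nat -> R) : Prop :=
  (forall j, (1 <= j <= K)%nat -> (cls j < N)%nat /\ 0 < l j /\ 0 <= a j) /\
  (forall j, (1 <= j < K)%nat -> a j <= a (S j)) /\
  (forall n, (n < N)%nat -> forall s t, 0 <= s -> s <= t ->
      Arr K cls a l n s t <= r n * (t - s) + sigma n).

(* Main.v *)
Require Import Defs.
From Stdlib Require Import Reals Lra Lia.
Open Scope R_scope.

Lemma sumR_S n f : sumR (S n) f = sumR n f + f n.
Proof. reflexivity. Qed.

Lemma sumR_ext n f g : (forall k, (k < n)%nat -> f k = g k) -> sumR n f = sumR n g.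
Proof. induction n; intros H; simpl; auto. rewrite IHn by (intros; apply H; lia). rewrite H by lia. auto. Qed.

Lemma sumR_le n f g : (forall k, (k < n)%nat -> f k <= g k) -> sumR n f <= sumR n g.
Proof. induction n; intros H; simpl; [lra|]. assert (f n <= g n) by (apply H; lia).
  assert (sumR n f <= sumR n g) by (apply IHn; intros; apply H; lia). lra. Qed.

Lemma sumR_zero n f : (forall k, (k < n)%nat -> f k = 0) -> sumR n f = 0.
Proof. induction n; intros H; simpl; auto. rewrite IHn by (intros; apply H; lia). rewrite H by lia. ring. Qed.

Lemma sumR_nonneg n f : (forall k, (k < n)%nat -> 0 <= f k) -> 0 <= sumR n f.
Proof. induction n; intros H; simpl; [lra|]. assert (0 <= f n) by (apply H; lia).
  assert (0 <= sumR n f) by (apply IHn; intros; apply H; lia). lra. Qed.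

Lemma sumR_plus n f g : sumR n (fun k => f k + g k) = sumR n f + sumR n g.
Proof. induction n; simpl; [ring|]. rewrite IHn. ring. Qed.

Lemma sumR_scal n f c : sumR n (fun k => f k * c) = sumR n f * c.
Proof. induction n; simpl; [ring|]. rewrite IHn. ring. Qed.

Lemma sumR_exch m n F :
  sumR m (fun k => sumR n (fun i => F k i)) = sumR n (fun i => sumR m (fun k => F k i)).
Proof. induction m; simpl.
  - symmetry. apply sumR_zero. auto.
  - rewrite IHm. rewrite <- sumR_plus. reflexivity. Qed.

Lemma sumR_single N c x : (c < N)%nat ->
  sumR N (fun n => if Nat.eqb c n then x n else 0) = x c.
Proof. induction N; intros H; [lia|]. rewrite sumR_S.
  destruct (Nat.eqb_spec c N).
  - subst. rewrite sumR_zero. ring. intros k Hk. destruct (Nat.eqb_spec N k); [lia|auto].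
  - rewrite IHN by lia. ring. Qed.

Lemma sumR_len m n g : (forall k, (m <= k < n)%nat -> 0 <= g k) -> (m <= n)%nat ->
  sumR m g <= sumR n g.
Proof. induction n; intros H Hmn.
  - assert (m = 0%nat) by lia. subst. lra.
  - destruct (Nat.eq_dec m (S n)). subst; lra.
    rewrite sumR_S. assert (0 <= g n) by (apply H; lia).
    assert (sumR m g <= sumR n g) by (apply IHn; [intros; apply H; lia| lia]). lra. Qed.

Lemma dep_S C cls a l j : dep C cls a l (S j) = Rmax (a (S j)) (dep C cls a l j) + l (S j) / C (cls (S j)).
Proof. reflexivity. Qed.

Definition Sd (C : nat -> R) (cls : nat -> nat) (l : nat -> R) (i j : nat) : R :=
  sumR j (fun k => if Nat.leb i (S k) then l (S k) / C (cls (S k)) else 0).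

Lemma Sd_S C cls l i j : Sd C cls l i (S j) = Sd C cls l i j +
  (if Nat.leb i (S j) then l (S j) / C (cls (S j)) else 0).
Proof. reflexivity. Qed.

Lemma busy C cls a l j : (forall k, (1 <= k <= j)%nat -> 0 <= a k) -> (1 <= j)%nat ->
  exists i, (1 <= i <= j)%nat /\ dep C cls a l j = a i + Sd C cls l i j.
Proof.
  induction j; intros Ha Hj; [lia|].
  rewrite dep_S. destruct (Rle_dec (dep C cls a l j) (a (S j))).
  - exists (S j). split; [lia|]. rewrite Rmax_left by lra. rewrite Sd_S.
    unfold Sd. rewrite sumR_zero. destruct (Nat.leb_spec (S j) (S j)); [ring|lia].
    intros k Hk. destruct (Nat.leb_spec (S j) (S k)); [lia|auto].
  - destruct j. { exfalso. apply n. simpl. apply Ha. lia. }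
    destruct IHj as [i [Hi Hd]]. intros; apply Ha; lia. lia.
    exists i. split; [lia|]. rewrite Rmax_right by lra. rewrite Hd. rewrite (Sd_S C cls l i (S j)).
    destruct (Nat.leb_spec i (S (S j))); [ring|lia].
Qed.

Definition T (cls : nat -> nat) (l : nat -> R) (i j n : nat) : R :=
  sumR j (fun k => if Nat.leb i (S k) then (if Nat.eqb (cls (S k)) n then l (S k) else 0) else 0).

Lemma Sd_decomp N C cls l i j : (forall k, (1 <= k <= j)%nat -> (cls k < N)%nat) ->
  Sd C cls l i j = sumR N (fun n => T cls l i j n / C n).
Proof.
  intros H. unfold Sd.
  transitivity (sumR j (fun k => sumR N (fun n =>
     (if Nat.leb i (S k) then (if Nat.eqb (cls (S k)) n then l (S k) else 0) else 0) / C n))).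
  - apply sumR_ext; intros k Hk. destruct (Nat.leb i (S k)).
    + symmetry. transitivity (sumR N (fun n => if Nat.eqb (cls (S k)) n then (fun n => l (S k) / C n) n else 0)).
      * apply sumR_ext; intros n _. destruct (Nat.eqb (cls (S k)) n); simpl; unfold Rdiv; ring.
      * apply sumR_single. apply H; lia.
    + symmetry. apply sumR_zero. intros; unfold Rdiv; ring.
  - rewrite sumR_exch. apply sumR_ext; intros n _. unfold T, Rdiv. apply sumR_scal.
Qed.

Lemma a_mono K (a : nat -> R) : (forall j, (1 <= j < K)%nat -> a j <= a (S j)) ->
  forall i j, (1 <= i)%nat -> (i <= j)%nat -> (j <= K)%nat -> a i <= a j.
Proof.
  intros H i j Hi. induction j; intros Hij HjK; [lia|].
  destruct (Nat.eq_dec i (S j)). subst; lra.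
  assert (a i <= a j) by (apply IHj; lia). assert (a j <= a (S j)) by (apply H; lia). lra.
Qed.

Lemma T_le_Arr K cls a l i j n : (j <= K)%nat -> (1 <= i)%nat ->
  (forall k, (1 <= k <= K)%nat -> 0 <= l k) ->
  (forall k, (i <= k <= j)%nat -> a i <= a k <= a j) ->
  T cls l i j n <= Arr K cls a l n (a i) (a j).
Proof.
  intros HjK Hi Hl Hmono. unfold T, Arr.
  apply Rle_trans with (sumR j (fun i0 => if Nat.eqb (cls (S i0)) n then
      if Rle_dec (a i) (a (S i0)) then if Rle_dec (a (S i0)) (a j) then l (S i0) else 0 else 0 else 0)).
  - apply sumR_le; intros k Hk.
    assert (0 <= l (S k)) by (apply Hl; lia).
    assert (Hm : (i <= S k)%nat -> a i <= a (S k) <= a j) by (intro; apply Hmono; lia).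
    destruct (Nat.leb_spec i (S k)) as [Hik|Hik]; [specialize (Hm Hik)|];
    destruct (Nat.eqb (cls (S k)) n); destruct (Rle_dec (a i) (a (S k)));
    try destruct (Rle_dec (a (S k)) (a j)); lra.
  - apply sumR_len; [|lia]. intros k Hk. assert (0 <= l (S k)) by (apply Hl; lia).
    destruct (Nat.eqb (cls (S k)) n); destruct (Rle_dec (a i) (a (S k)));
    try destruct (Rle_dec (a (S k)) (a j)); lra.
Qed.

Lemma dep_ext C cls cls' a l l' k : (forall j, (1 <= j <= k)%nat -> cls' j = cls j /\ l' j = l j) ->
  dep C cls' a l' k = dep C cls a l k.
Proof.
  induction k; intros H; [reflexivity|]. rewrite !dep_S. rewrite IHk by (intros; apply H; lia).
  destruct (H (S k)) as [E1 E2]; [lia|]. rewrite E1, E2. reflexivity.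
Qed.

Lemma constr N (C sigma : nat -> R) (HC : forall n, (n < N)%nat -> 0 < C n)
  (Hs : forall n, (n < N)%nat -> 0 <= sigma n) : forall M, (M <= N)%nat ->
  exists K cls l, (forall j, (1 <= j <= K)%nat -> (cls j < M)%nat /\ 0 < l j) /\
   (forall n, (n < M)%nat -> sumR K (fun i => if Nat.eqb (cls (S i)) n then l (S i) else 0) = sigma n) /\
   dep C cls (fun _ => 0) l K = sumR M (fun n => sigma n / C n).
Proof.
  induction M; intros HM.
  - exists 0%nat, (fun _ => 0%nat), (fun _ => 1). repeat split; intros; try lia; reflexivity.
  - destruct IHM as [K [cls [l [P1 [P2 P3]]]]]; [lia|].
    assert (HsM : 0 <= sigma M) by (apply Hs; lia).
    assert (HCM : 0 < C M) by (apply HC; lia).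
    assert (Hpos : 0 <= sumR M (fun n => sigma n / C n)).
    { apply sumR_nonneg. intros k Hk. unfold Rdiv. apply Rmult_le_pos. apply Hs; lia.
      left; apply Rinv_0_lt_compat; apply HC; lia. }
    assert (Hz : sumR K (fun i => if Nat.eqb (cls (S i)) M then l (S i) else 0) = 0).
    { apply sumR_zero. intros k Hk. destruct (P1 (S k)) as [Hc _]; [lia|].
      destruct (Nat.eqb_spec (cls (S k)) M); [lia|auto]. }
    destruct (Rlt_dec 0 (sigma M)).
    + exists (S K), (fun j => if Nat.eqb j (S K) then M else cls j),
        (fun j => if Nat.eqb j (S K) then sigma M else l j).
      split; [|split].
      * intros j Hj. destruct (Nat.eqb_spec j (S K)). split; [lia|auto].
        destruct (P1 j) as [A B]; [lia|]. split; [lia|auto].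
      * intros n Hn. rewrite sumR_S.
        rewrite (sumR_ext K _ (fun i => if Nat.eqb (cls (S i)) n then l (S i) else 0)).
        2:{ intros k Hk. destruct (Nat.eqb_spec (S k) (S K)); [lia|reflexivity]. }
        rewrite Nat.eqb_refl. destruct (Nat.eqb_spec M n).
        -- subst. rewrite Hz. ring.
        -- rewrite P2 by lia. ring.
      * rewrite dep_S, Nat.eqb_refl. rewrite (dep_ext C cls _ _ l). rewrite P3. rewrite sumR_S.
        rewrite Rmax_right by lra. reflexivity.
        intros j Hj. destruct (Nat.eqb_spec j (S K)); [lia|auto].
    + assert (sigma M = 0) by lra.
      exists K, cls, l. split; [|split].
      * intros j Hj. destruct (P1 j) as [A B]; [lia|]. split; [lia|auto].
      * intros n0 Hn. destruct (Nat.eq_dec n0 M). subst. rewrite Hz. auto. apply P2. lia.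
      * rewrite P3, sumR_S, H. unfold Rdiv. ring.
Qed.

Theorem theorem1 (N : nat) (C r sigma : nat -> R)
  (HC : forall n, (n < N)%nat -> 0 < C n)
  (Hr : forall n, (n < N)%nat -> 0 <= r n)
  (Hs : forall n, (n < N)%nat -> 0 <= sigma n)
  (Hrho : sumR N (fun n => r n / C n) <= 1) :
  (forall (K : nat) (cls : nat -> nat) (a l : nat -> R),
      valid_trace N r sigma K cls a l ->
      forall j, (1 <= j <= K)%nat ->
        dep C cls a l j - a j <= sumR N (fun n => sigma n / C n)) /\
  ((exists m, (m < N)%nat /\ 0 < sigma m) ->
   exists (K : nat) (cls : nat -> nat) (a l : nat -> R),
      valid_trace N r sigma K cls a l /\
      exists j, (1 <= j <= K)%nat /\
        dep C cls a l j - a j = sumR N (fun n => sigma n / C n)).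
Proof.
  split.
  - intros K cls a l [H1 [H2 H3]] j Hj.
    destruct (busy C cls a l j) as [i [Hi Hdep]].
    { intros k Hk. apply H1. lia. } { lia. }
    assert (Hmono : forall k, (i <= k <= j)%nat -> a i <= a k <= a j).
    { intros k Hk. split; apply (a_mono K a H2); lia. }
    rewrite Hdep. rewrite (Sd_decomp N) by (intros k Hk; apply H1; lia).
    assert (Hle : sumR N (fun n => T cls l i j n / C n) <=
                  sumR N (fun n => (r n * (a j - a i) + sigma n) / C n)).
    { apply sumR_le; intros n Hn. unfold Rdiv. apply Rmult_le_compat_r.
      left; apply Rinv_0_lt_compat; auto.
      eapply Rle_trans. apply (T_le_Arr K). lia. lia.
      intros k Hk; left; apply H1; lia. exact Hmono.
      apply H3; auto. apply H1; lia. destruct (Hmono j); [lia|lra]. }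
    assert (Heq : sumR N (fun n => (r n * (a j - a i) + sigma n) / C n) =
       sumR N (fun n => r n / C n) * (a j - a i) + sumR N (fun n => sigma n / C n)).
    { transitivity (sumR N (fun n => r n / C n * (a j - a i) + sigma n / C n)).
      apply sumR_ext; intros; unfold Rdiv; ring.
      rewrite sumR_plus. rewrite (sumR_scal N (fun n => r n / C n) (a j - a i)). reflexivity. }
    assert (Hd : 0 <= a j - a i) by (destruct (Hmono j); [lia|lra]).
    assert (sumR N (fun n => r n / C n) * (a j - a i) <= 1 * (a j - a i))
      by (apply Rmult_le_compat_r; lra).
    lra.
  - intros [m [Hm Hsm]].
    destruct (constr N C sigma HC Hs N (le_n N)) as [K [cls [l [P1 [P2 P3]]]]].
    exists K, cls, (fun _ => 0), l. split.
    + split; [|split].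
      * intros j Hj. destruct (P1 j Hj). repeat split; auto; lra.
      * intros; lra.
      * intros n Hn s t Hs0 Hst. unfold Arr.
        apply Rle_trans with (sumR K (fun i => if Nat.eqb (cls (S i)) n then l (S i) else 0)).
        -- apply sumR_le; intros k Hk. destruct (P1 (S k)) as [_ Hl]; [lia|].
           destruct (Nat.eqb (cls (S k)) n); destruct (Rle_dec s 0);
           try destruct (Rle_dec 0 t); lra.
        -- rewrite P2 by auto. assert (0 <= r n * (t - s)) by (apply Rmult_le_pos; [apply Hr; auto|lra]). lra.
    + destruct K.
      * exfalso. specialize (P2 m Hm). simpl in P2. lra.
      * exists (S K). split; [lia|]. rewrite P3. lra.
Qed.
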